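(* Let $G$ be a finite, simple, connected graph and let $k\geq 3$ be an integer. Then $$\gamma_{B_k}(G)=\min\{\gamma_{B_k}(T)\colon T \text{ is a spanning tree of } G\}.$$
   Context: $d(u,v)$ denotes the distance in the graph. For a connected graph $G$ and an integer $k\ge 1$, a function $f\colon V(G)\to\{0,1,\dots,k\}$ is a dominating $k$-broadcast on $G$ if for every $u\in V(G)$ there is a vertex $v$ with $f(v)\geq 1$ and $d(u,v)\leq f(v)$. Its cost is $\omega(f)=\sum_{u\in V(G)}f(u)$, and the dominating $k$-broadcast number $\gamma_{B_k}(G)$ is the minimum cost of a dominating $k$-broadcast on $G$. *)

(* Defs.v *)
From mathcomp Require Import all_boot.
From mathcomp Require Import boolp.
Set Implicit Arguments. Unset Strict Implicit. Unset Printing Implicit Defensive.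

Section Graphs.
Variable V : finType.

Definition simple_graph (e : rel V) : Prop :=
  symmetric e /\ irreflexive e.

Definition connected (e : rel V) : Prop := forall u v : V, connect e u v.

(* a cycle: distinct vertices x :: p (at least 3 of them) forming a closed walk *)
Definition acyclic (e : rel V) : Prop :=
  ~ exists (x : V) (p : seq V),
      [/\ 2 <= size p, uniq (x :: p), path e x p & e (last x p) x].

Definition is_tree (e : rel V) : Prop :=
  simple_graph e /\ connected e /\ acyclic e.

Definition spanning_tree (e t : rel V) : Prop :=
  is_tree t /\ subrel t e.

(* within e u v n  <->  d(u,v) <= n : there is a walk from u to v with at most n edges *)
Definition within (e : rel V) (u v : V) (n : nat) : Prop :=
  exists p : seq V, [/\ path e u p, last u p = v & size p <= n].

Definition dom_broadcast (e : rel V) (k : nat) (f : {ffun V -> 'I_k.+1}) : Prop :=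
  forall u : V, exists v : V, 1 <= f v /\ within e u v (f v).

Definition cost (k : nat) (f : {ffun V -> 'I_k.+1}) : nat := \sum_(u : V) (f u : nat).

(* The default
   #|V| * k is an upper bound for every cost, so whenever a dominating
   k-broadcast exists (e.g. for connected graphs) this is the true minimum. *)
Definition gammaB (e : rel V) (k : nat) : nat :=
  \big[minn/#|V| * k]_(f : {ffun V -> 'I_k.+1} | `[< dom_broadcast e f >]) cost f.
End Graphs.

(* Main.v *)
Require Import Defs.
From mathcomp Require Import all_boot boolp zify.
Set Implicit Arguments. Unset Strict Implicit. Unset Printing Implicit Defensive.

Section Proof.
Variables (V : finType) (k : nat) (f : {ffun V -> 'I_k.+1}).

Definition rm (t : rel V) (y z : V) : rel V :=
  fun u w => t u w && ~~ (((u == y) && (w == z)) || ((u == z) && (w == y))).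

Section Forest.
Variable t : rel V.
Hypothesis tsym : symmetric t.
Hypothesis tirr : irreflexive t.
Hypothesis tdom : dom_broadcast t f.

Definition W (u : V) : pred (V * 'I_k.+1) :=
  fun x => `[< 1 <= f x.1 /\ x.2 <= f x.1 /\ within t u x.1 x.2 >].

Definition s (u : V) : nat := \max_(x | W u x) (f x.1 - x.2).

Lemma sW u x : W u x -> f x.1 - x.2 <= s u.
Proof. by move=> h; exact: (leq_bigmax_cond _ h). Qed.

Lemma s_le_k u : s u <= k.
Proof.
apply/bigmax_leqP => x _; apply: leq_trans (leq_subr _ _) _.
by rewrite -ltnS ltn_ord.
Qed.

Lemma s_wit u : exists2 x, W u x & s u = f x.1 - x.2.
Proof.
have [v [hv hw]] := tdom u.
have Hx : W u (v, f v) by apply/asboolP; split => //=; split.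
case: (arg_maxnP (fun x : V * 'I_k.+1 => f x.1 - x.2) Hx) => x Wx xmax.
exists x => //; apply/eqP; rewrite eqn_leq sW // andbT.
by apply/bigmax_leqP => y /xmax.
Qed.

Definition par u := if [pick w | t u w && (s u < s w)] is Some w then w else u.

Lemma parP u : (par u = u /\ forall w, t u w -> s w <= s u) \/
               (t u (par u) /\ s u < s (par u)).
Proof.
rewrite /par; case: pickP => [w /andP[h1 h2]|h]; [by right|left].
split => // w tw; move: (h w); rewrite tw /= => /negbT; by rewrite -leqNgt.
Qed.

Definition F : rel V := fun u w =>
  ((w == par u) && (w != u)) || ((u == par w) && (u != w)).

Lemma F_sym : symmetric F.
Proof. by move=> u w; rewrite /F orbC. Qed.

Lemma F_t u w : F u w -> t u w.
Proof.
case/orP => /andP[/eqP -> ne].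
  by case: (parP u) => [[pu _]|[h _]]; [rewrite pu eqxx in ne | done].
rewrite tsym.
by case: (parP w) => [[pw _]|[h _]]; [rewrite pw eqxx in ne | done].
Qed.

Lemma F_par u w : F u w -> s u <= s w -> w = par u.
Proof.
case/orP => /andP[/eqP e ne] // le.
case: (parP w) => [[pw _]|[_ h]]; first by rewrite e pw eqxx in ne.
by rewrite -e in h; rewrite leqNgt h in le.
Qed.

Lemma root u : exists r, [/\ 1 <= f r, s u <= f r & within F u r (f r - s u)].
Proof.
suff H : forall m u, k - s u < m ->
  exists r, [/\ 1 <= f r, s u <= f r & within F u r (f r - s u)].
  exact: (H (k - s u).+1).
elim => [|m IH] {}u hm //.
case: (parP u) => [[pu hb]|[tu lt]].
- have [[v n] /asboolP [/= h1 [h2 [p [pp lp sp]]]] su] := s_wit u.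
  case: p pp lp sp => [|w p] /= pp lp sp.
  + subst v; exists u; rewrite su; split => //; [lia | by exists [::]].
  + move/andP: pp => [tw pp].
    have hn : n.-1 < k.+1 by apply: leq_ltn_trans (leq_pred _) (ltn_ord n).
    have Ww : W w (v, Ordinal hn).
      apply/asboolP; split; first by [].
      split; first by rewrite /=; apply: leq_trans (leq_pred _) h2.
      by exists p; split => //=; lia.
    have := sW Ww; have := hb w tw; rewrite /= => h3 h4.
    have : f v - n.-1 <= f v - n.
      apply: leq_trans h4 _; apply: leq_trans h3 _.
      by rewrite su.
    lia.
- set w := par u in tu lt *.
  have := IH w _; case; first by have := s_le_k w; lia.
  move=> r [h1 h2 [p [pp lp sp]]]; exists r; split => //; first lia.
  exists (w :: p); split => //=; last lia.
  rewrite pp andbT /F eqxx /=.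
  have -> : w != u by apply/eqP => ew; rewrite -ew tirr in tu.
  by [].
Qed.


Lemma dom_rm y z : ~~ F y z -> dom_broadcast (rm t y z) f.
Proof.
move=> nF u; have [r [h1 h2 [p [pp lp sp]]]] := root u.
exists r; split => //; exists p; split => //; last lia.
apply: sub_path pp => a b fab; rewrite /rm F_t //=.
apply/negP => /orP[] /andP[/eqP ea /eqP eb]; subst a b.
  by rewrite fab in nF.
by rewrite F_sym fab in nF.
Qed.

Lemma rm_sym y z : symmetric (rm t y z).
Proof.
move=> a b; rewrite /rm tsym; congr (_ && ~~ _).
by rewrite orbC [X in X || _]andbC [X in _ || X]andbC.
Qed.

Lemma cyc_edge : ~ acyclic t ->
  exists y z, [/\ t y z, ~~ F y z & connect (rm t y z) y z].
Proof.
move=> /contrapT [x [p [sp up pp lp]]].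
have cyc : cycle t (x :: p) by rewrite /= rcons_path pp lp.
set c := x :: p.
have [y yc ymin] : exists2 y, y \in c & forall z, z \in c -> s y <= s z.
  case: (@arg_minnP V x (fun z => z \in c) s (mem_head _ _)) => y yc ymin.
  by exists y.
case/rot_to: yc => i q rq.
have cq : cycle t (y :: q) by rewrite -rq rot_cycle.
have uq : uniq (y :: q) by rewrite -rq rot_uniq.
have szq : 2 <= size q.
  by move: (size_rot i c); rewrite rq /= => [[->]].
have mq z : z \in q -> s y <= s z.
  by move=> zq; apply: ymin; rewrite -(mem_rot i) rq inE zq orbT.
clear rq.
case: q cq uq szq mq => [|a q'] //= cq uq szq mq.
move: cq; rewrite rcons_path => /andP[tya /andP[pq tby]].
case: q' uq szq mq pq tby => [|b0 q''] // uq _ mq pq tby.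
move: tby; rewrite /= => tby.
set b := last b0 q'' in tby.
have bq : b \in b0 :: q'' by exact: mem_last.
move: uq => /andP[yn /andP[aq uq']].
have ya : y != a by apply: contraNneq yn => ->; exact: mem_head.
have yq : y \notin b0 :: q'' by apply: contra yn => h; rewrite inE h orbT.
have ab : a != b by apply/eqP => eab; rewrite eab bq in aq.
have yb : y != b by apply/eqP => eyb; rewrite eyb bq in yq.
have notboth : ~~ (F y a && F y b).
  apply/negP => /andP[fa fb].
  have pa := F_par fa (mq a (mem_head _ _)).
  have pb := F_par fb (mq b ltac:(by rewrite inE bq orbT)).
  by rewrite pa pb eqxx in ab.
have cab z : connect (rm t y z) a b.
  apply/connectP; exists (b0 :: q'') => //.
  apply: (@sub_in_path _ (fun v => v != y)) pq.
    move=> u w /= uy wy tuw; rewrite /rm tuw /=.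
    by rewrite (negbTE uy) (negbTE wy) andbF.
  apply/allP => v; rewrite inE => /orP[/eqP ->|vq]; first by rewrite eq_sym.
  by apply/eqP => vy; rewrite -vy vq in yq.
have tyb : t y b by rewrite tsym.
case Fa: (F y a).
- exists y, b; split => //; first by move: notboth; rewrite Fa.
  apply: connect_trans (connect1 _) (cab b).
  by rewrite /rm tya eqxx /= (negbTE ab) (negbTE yb).
- exists y, a; split => //; first by rewrite Fa.
  rewrite (sym_connect_sym (@rm_sym y a)).
  apply: connect_trans (cab a) (connect1 _).
  by rewrite /rm tby eqxx andbT /= [b == y]eq_sym (negbTE yb) [b == a]eq_sym (negbTE ab).
Qed.

End Forest.

Definition good (e t : rel V) :=
  [/\ symmetric t, irreflexive t, subrel t e, connected t & dom_broadcast t f].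
Definition ecard (t : rel V) := #|[set p : V * V | t p.1 p.2]|.

Lemma step e t : good e t -> ~ acyclic t ->
  exists t', good e t' /\ ecard t' < ecard t.
Proof.
case=> ts ti te tc td nac.
have [y [z [tyz nF cyz]]] := cyc_edge ts nac.
exists (rm t y z); split; last first.
  apply: proper_card; apply/properP; split.
    by apply/subsetP => p; rewrite !inE /rm => /andP[].
  by exists (y, z); rewrite !inE /= ?tyz // /rm tyz !eqxx.
split.
- exact: rm_sym.
- by move=> u; rewrite /rm ti.
- by move=> u w /andP[/te].
- move=> u v; apply: (connect_sub _ (tc u v)) => a b tab.
  case rab: (rm t y z a b); first exact: connect1.
  move: rab; rewrite /rm tab /= => /negbFE /orP[] /andP[/eqP-> /eqP->] //.
  by rewrite (sym_connect_sym (rm_sym ts y z)).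
- exact: dom_rm.
Qed.

Lemma build e n t : ecard t <= n -> good e t -> exists T, good e T /\ acyclic T.
Proof.
elim: n t => [|n IH] t ht g; case: (EM (acyclic t)) => [ac|nac];
  try by exists t.
- by have [t' [_ lt]] := step g nac; lia.
- have [t' [g' lt]] := step g nac; apply: (IH t') => //; lia.
Qed.

End Proof.

Lemma bigmin_le (I : finType) (P : pred I) (F : I -> nat) d i :
  P i -> \big[minn/d]_(j | P j) F j <= F i.
Proof.
move=> Pi; have : i \in index_enum I by rewrite mem_index_enum.
elim: (index_enum I) => [//|x r IH]; rewrite inE big_cons => /orP[/eqP <-|ir].
  by rewrite Pi geq_minl.
case: (P x); last exact: IH.
exact: leq_trans (geq_minr _ _) (IH ir).
Qed.

Lemma bigmin_wit (I : finType) (P : pred I) (F : I -> nat) d i0 :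
  P i0 -> (forall i, P i -> F i <= d) ->
  exists2 j, P j & \big[minn/d]_(j | P j) F j = F j.
Proof.
move=> Pi0 hd.
have : (\big[minn/d]_(j | P j) F j = d) \/
       exists2 j, P j & \big[minn/d]_(j | P j) F j = F j.
  apply: (big_ind (fun x => x = d \/ exists2 j, P j & x = F j)).
  - by left.
  - by move=> x y hx hy; rewrite /minn; case: ifP.
  - by move=> j Pj; right; exists j.
case=> // hb; exists i0 => //; apply/eqP; rewrite eqn_leq bigmin_le //=.
by rewrite hb hd.
Qed.

Theorem theorem2 (V : finType) (e : rel V) (k : nat) :
  simple_graph e -> connected e -> 3 <= k ->
  (exists t : rel V, spanning_tree e t /\ gammaB t k = gammaB e k) /\
  (forall t : rel V, spanning_tree e t -> gammaB e k <= gammaB t k).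
Proof.
move=> [es ei] ec hk.
have cb (g : {ffun V -> 'I_k.+1}) : cost g <= #|V| * k.
  rewrite /cost; apply: (@leq_trans (\sum_(u : V) k)).
    by apply: leq_sum => i _; rewrite -ltnS ltn_ord.
  by rewrite sum_nat_const.
have h1 : 1 < k.+1 by lia.
pose f1 : {ffun V -> 'I_k.+1} := [ffun _ => Ordinal h1].
have d1 (t : rel V) : dom_broadcast t f1.
  by move=> u; exists u; rewrite ffunE; split => //; exists [::].
have mono (t1 t2 : rel V) : subrel t1 t2 -> forall g : {ffun V -> 'I_k.+1}, dom_broadcast t1 g -> dom_broadcast t2 g.
  move=> st g dg u; have [v [hv [p [pp lp sp]]]] := dg u.
  by exists v; split => //; exists p; split => //; apply: sub_path pp.
have gle (t : rel V) (g : {ffun V -> 'I_k.+1}) : dom_broadcast t g -> gammaB t k <= cost g.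
  move=> dg; rewrite /gammaB; apply: (bigmin_le (P := fun g => `[< dom_broadcast t g >])); exact/asboolP.
have gwit (t : rel V) : exists2 g : {ffun V -> 'I_k.+1}, dom_broadcast t g & gammaB t k = cost g.
  have [g /asboolP dg eg] := @bigmin_wit _ (fun g => `[< dom_broadcast t g >]) (@cost V k)
     (#|V| * k) f1 (introT (asboolP _) (d1 t)) (fun g _ => cb g).
  by exists g.
have part2 (t : rel V) : spanning_tree e t -> gammaB e k <= gammaB t k.
  move=> [_ st]; have [g dg ->] := gwit t; apply: gle; exact: mono dg.
split => //.
have [g dg eg] := gwit e.
have [T [[ts ti te tc td] ac]] := @build V k g e (ecard e) e (leqnn _)
   (And5 es ei (fun _ _ h => h) ec dg).
have sT : spanning_tree e T by split => //; split => //; split.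
exists T; split => //; apply/eqP; rewrite eqn_leq part2 // andbT eg.
exact: gle.
Qed.
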